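(* Let $X=\mathrm{tv}(b_0,\dots,b_l)$ be a smooth complete toric surface with $b_0<0$ and $l>2$, with rays $\rho_0,\dots,\rho_l$ as below. Let $\alpha$ be the unique index with $1<\alpha<l$ such that $\rho_\alpha=-\rho_0$ (equivalently, the continued fraction $[b_1,\dots,b_{\alpha-1}]$ is well defined and equals $0$), and put $\gamma=\sum_{i=1}^{\alpha-1}(3-b_i)-3$. Then $\gamma\ge0$, $b_0+b_\alpha-\gamma\ge0$, and for every $R\in(\mathbb Z^2)^*$ with $\langle\rho_\alpha,R\rangle=1$ one has $\langle\rho_{\alpha-1},R\rangle-\langle\rho_1,R\rangle=\gamma$.
   Context: For integers $b_0,\dots,b_l$, $\mathrm{tv}(b_0,\dots,b_l)$ denotes the smooth complete toric surface whose fan in $\mathbb Z^2\otimes\mathbb Q$ has rays with primitive generators $\rho_0,\dots,\rho_l$ in cyclic order (indices mod $l+1$), satisfying $b_i\rho_i=\rho_{i-1}+\rho_{i+1}$; equivalently, $-b_i$ is the self-intersection number of the invariant prime divisor corresponding to $\rho_i$. The continued fraction is defined by $[c_k]=c_k$ and $[c_1,\dots,c_k]=c_1-1/[c_2,\dots,c_k]$ when no division by zero occurs. *)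

(* Defs.v *)
From HB Require Import structures.
From mathcomp Require Import all_boot all_order all_algebra.
Set Implicit Arguments. Unset Strict Implicit. Unset Printing Implicit Defensive.
Import Order.TTheory GRing.Theory Num.Theory.
Local Open Scope ring_scope.

(* vectors of Z^2 and of its dual (Z^2)^* *)
Definition vec2 := (int * int)%type.

Definition det2 (u v : vec2) : int := u.1 * v.2 - u.2 * v.1.

Definition pair2 (v R : vec2) : int := v.1 * R.1 + v.2 * R.2.

Definition vadd (u v : vec2) : vec2 := (u.1 + v.1, u.2 + v.2).
Definition vscale (c : int) (u : vec2) : vec2 := (c * u.1, c * u.2).
Definition vopp (u : vec2) : vec2 := (- u.1, - u.2).

Definition cyc (l i : nat) : nat := (i %% l.+1)%N.

(* [is_tv l b rho]: the vectors rho 0, ..., rho l are the primitive ray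
   generators, in counterclockwise cyclic order, of a smooth complete fan
   in Z^2 (the fan of tv(b_0,...,b_l)), i.e.
   - consecutive rays form a positively oriented lattice basis
     (smoothness; implies primitivity), indices mod l+1;
   - the 2-dimensional cones cone(rho_i, rho_{i+1}) cover Z^2 (completeness)
     and have pairwise disjoint interiors (so they form a fan);
   - b_i rho_i = rho_{i-1} + rho_{i+1} for 0 <= i <= l (indices mod l+1). *)
Definition is_tv (l : nat) (b : nat -> int) (rho : nat -> vec2) : Prop :=
  let r := fun i => rho (cyc l i) in
  [/\ (forall i : nat, det2 (r i) (r i.+1) = 1),
      (forall v : vec2, exists i : nat,
          [/\ (i < l.+1)%N, 0 <= det2 v (r i.+1) & 0 <= det2 (r i) v]),
      (forall (v : vec2) (i j : nat), (i < l.+1)%N -> (j < l.+1)%N ->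
          0 < det2 v (r i.+1) -> 0 < det2 (r i) v ->
          0 < det2 v (r j.+1) -> 0 < det2 (r j) v -> i = j)
    & (forall i : nat, (i < l.+1)%N ->
          vscale (b i) (r i) = vadd (r (i + l)%N) (r i.+1))].

Definition gamma_of (b : nat -> int) (alpha : nat) : int :=
  \sum_(1 <= i < alpha) (3 - b i) - 3.

(* Main.v *)
Require Import Defs.
From Stdlib Require Import ZArith Lia Classical.
From HB Require Import structures.
From mathcomp Require Import all_boot all_order all_algebra.
Import Order.TTheory GRing.Theory Num.Theory.
Local Open Scope ring_scope.

Section ZT.
Local Open Scope Z_scope.
Definition z (x : int) : Z := match x with Posz n => Z.of_nat n | Negz n => - Z.of_nat n - 1 end.
Lemma zN x : z (- x)%R = - z x.
Proof. case: x => [[|n]|n] /=; lia. Qed.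
Lemma zPos n : z (Posz n) = Z.of_nat n. Proof. by []. Qed.
Lemma zNeg n : z (Negz n) = - Z.of_nat n - 1. Proof. by []. Qed.
Lemma zsub m n : (n <= m)%N -> Z.of_nat (m - n)%N = Z.of_nat m - Z.of_nat n.
Proof. move/ssrnat.leP=> H. rewrite -minusE Nat2Z.inj_sub //. Qed.
Lemma zD x y : z (x + y)%R = z x + z y.
Proof.
change (z (intZmod.addz x y) = z x + z y).
case: x => [m|m]; case: y => [n|n]; rewrite /intZmod.addz.
- by rewrite !zPos -plusE Nat2Z.inj_add.
- case: (ltnP n m) => H; rewrite ?zPos ?zNeg ?zsub //; try lia; match goal with |- ?g => idtac g end.
- case: (ltnP m n) => H; rewrite ?zPos ?zNeg ?zsub //; try lia; match goal with |- ?g => idtac g end.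
- rewrite !zNeg -plusE; try lia; match goal with |- ?g => idtac g end.
Qed.
Lemma zP n : z (Posz n) = Z.of_nat n. Proof. by []. Qed.
Lemma zM x y : z (x * y)%R = z x * z y.
Proof.
case: x => [m|m]; case: y => [n|n]; rewrite ?NegzE ?mulrN ?mulNr ?opprK -?PoszM ?zN !zP ?Nat2Z.inj_mul ?zNeg; try lia; match goal with |- ?g => idtac g end.
Qed.
Lemma zB x y : z (x - y)%R = z x - z y.
Proof. by rewrite zD zN; lia. Qed.
Lemma zn n : z (n%:R)%R = Z.of_nat n.
Proof. by rewrite natz. Qed.
Lemma z0 : z 0%R = 0. Proof. by []. Qed.
Lemma z1 : z 1%R = 1. Proof. by []. Qed.
Lemma zinj x y : z x = z y -> x = y.
Proof. case: x => [m|m]; case: y => [n|n] /= H; f_equal; lia. Qed.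
Lemma zeq x y : x = y <-> z x = z y.
Proof. split; [by move->|exact: zinj]. Qed.
Lemma zge0 w : (0 <= w)%R <-> 0 <= z w.
Proof. case: w => [n|n] /=; split => //; lia. Qed.
Lemma zgt0 w : (0 < w)%R <-> 0 < z w.
Proof. case: w => [[|n]|n] /=; split => //; lia. Qed.
Lemma zle x y : (x <= y)%R <-> z x <= z y.
Proof. rewrite -subr_ge0 zge0 zB; lia. Qed.
Lemma zlt x y : (x < y)%R <-> z x < z y.
Proof. rewrite -subr_gt0 zgt0 zB; lia. Qed.
End ZT.

Definition zE := (zD, zM, zB, zN, zn, z0, z1).

Ltac abs_det := repeat match goal with
 | |- context [det2 ?a ?b] => let d := fresh "d" in set (d := det2 a b) in *; clearbody d
 | H : context [det2 ?a ?b] |- _ => let d := fresh "d" in set (d := det2 a b) in *; clearbody d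
 | |- context [@bigop.body ?R ?I ?idx ?r ?F] => let d := fresh "s" in set (d := @bigop.body R I idx r F) in *; clearbody d
 | H : context [@bigop.body ?R ?I ?idx ?r ?F] |- _ => let d := fresh "s" in set (d := @bigop.body R I idx r F) in *; clearbody d
 | |- context [pair2 ?a ?b] => let d := fresh "d" in set (d := pair2 a b) in *; clearbody d
 | H : context [pair2 ?a ?b] |- _ => let d := fresh "d" in set (d := pair2 a b) in *; clearbody d
 end.
Ltac zify0 := repeat match goal with
 | H : ?x = ?y |- _ => let T := type of x in unify T int; apply zeq in H; rewrite ?zE in H
 | H : is_true (@Order.le _ _ _ _) |- _ => apply zle in H; rewrite ?zE in H
 | H : is_true (@Order.lt _ _ _ _) |- _ => apply zlt in H; rewrite ?zE in H
 | |- ?x = ?y => let T := type of x in unify T int; apply zeq; rewrite ?zE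
 | |- is_true (@Order.le _ _ _ _) => apply zle; rewrite ?zE
 | |- is_true (@Order.lt _ _ _ _) => apply zlt; rewrite ?zE
 end.
Ltac zify1 := zify0.
Ltac zifyd := abs_det; zify0.

Ltac vsimpl := rewrite /det2 /pair2 /vadd /vscale /vopp /=.
Ltac zring := intros; zify1; ring.
Ltac zlia := intros; zifyd; lia.

Lemma detDl u v w : det2 (vadd u v) w = det2 u w + det2 v w.
Proof. case: u v w => [u1 u2] [v1 v2] [w1 w2]; vsimpl; zring. Qed.
Lemma detDr u v w : det2 w (vadd u v) = det2 w u + det2 w v.
Proof. case: u v w => [u1 u2] [v1 v2] [w1 w2]; vsimpl; zring. Qed.
Lemma detZl c u w : det2 (vscale c u) w = c * det2 u w.
Proof. case: u w => [u1 u2] [w1 w2]; vsimpl; zring. Qed.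
Lemma detZr c u w : det2 w (vscale c u) = c * det2 w u.
Proof. case: u w => [u1 u2] [w1 w2]; vsimpl; zring. Qed.
Lemma detNl u w : det2 (vopp u) w = - det2 u w.
Proof. case: u w => [u1 u2] [w1 w2]; vsimpl; zring. Qed.
Lemma detNr u w : det2 w (vopp u) = - det2 w u.
Proof. case: u w => [u1 u2] [w1 w2]; vsimpl; zring. Qed.
Lemma detvv u : det2 u u = 0.
Proof. case: u => [u1 u2]; vsimpl; zring. Qed.
Lemma detC u v : det2 u v = - det2 v u.
Proof. case: u v => [u1 u2] [v1 v2]; vsimpl; zring. Qed.
Definition detE := (detDl, detDr, detZl, detZr, detNl, detNr, detvv).

Lemma vec_eq (u v : vec2) : u.1 = v.1 -> u.2 = v.2 -> u = v.
Proof. case: u v => [u1 u2] [v1 v2] /= -> -> //. Qed.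

Lemma cramer p s v : det2 p s = 1 ->
  v = vadd (vscale (det2 v s) p) (vscale (det2 p v) s).
Proof.
case: p s v => [p1 p2] [s1 s2] [v1 v2]; vsimpl => H; apply: vec_eq => /=; zify1.
- have := f_equal (Z.mul (z v1)) H; lia.
- have := f_equal (Z.mul (z v2)) H; lia.
Qed.

Lemma threeterm a b c : det2 a b = 1 -> det2 b c = 1 ->
  vscale (det2 a c) b = vadd a c.
Proof.
case: a b c => [a1 a2] [b1 b2] [c1 c2]; vsimpl => H1 H2; apply: vec_eq => /=; zify1.
- have := f_equal (Z.mul (z a1)) H2; have := f_equal (Z.mul (z c1)) H1; lia.
- have := f_equal (Z.mul (z a2)) H2; have := f_equal (Z.mul (z c2)) H1; lia.
Qed.

Lemma bdet c v p s : vscale c v = vadd p s -> det2 p v = 1 -> det2 p s = c.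
Proof.
move=> H H1. have : det2 p (vscale c v) = det2 p (vadd p s) by rewrite H.
by rewrite !detE H1 mulr1 add0r => ->.
Qed.

Lemma plucker r0 r1 u v : det2 r0 r1 = 1 ->
  det2 u v = det2 u r1 * det2 r0 v - det2 r0 u * det2 v r1.
Proof.
case: r0 r1 u v => [a1 a2] [s1 s2] [u1 u2] [v1 v2]; vsimpl => H; zify1.
have := f_equal (Z.mul (z u1 * z v2 - z u2 * z v1)) H; lia.
Qed.

Lemma pairE c d p s R : pair2 (vadd (vscale c p) (vscale d s)) R = c * pair2 p R + d * pair2 s R.
Proof. case: p s R => [p1 p2] [s1 s2] [R1 R2]; vsimpl; zring. Qed.
Lemma pairN p R : pair2 (vopp p) R = - pair2 p R.
Proof. case: p R => [p1 p2] [R1 R2]; vsimpl; zring. Qed.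



Lemma vcr_m1 p q : vadd (vscale (-1) p) (vscale 0 q) = vopp p.
Proof. case: p q => [p1 p2] [q1 q2]; vsimpl; apply: vec_eq => /=; zify1; ring. Qed.
Lemma vcr_01 p q : vadd (vscale 0 p) (vscale 1 q) = q.
Proof. case: p q => [p1 p2] [q1 q2]; vsimpl; apply: vec_eq => /=; zify1; ring. Qed.
Lemma lin_s_r c v p s u : vscale c v = vadd p s -> det2 u s = c * det2 u v - det2 u p.
Proof. move=> H; have := congr1 (det2 u) H; rewrite detZr detDr => ->; zring. Qed.
Lemma lin_s_l c v p s u : vscale c v = vadd p s -> det2 s u = c * det2 v u - det2 p u.
Proof. move=> H; have := congr1 (fun w => det2 w u) H; rewrite /= detZl detDl => ->; zring. Qed.
Lemma lin_p_r c v p s u : vscale c v = vadd p s -> det2 u p = c * det2 u v - det2 u s.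
Proof. move=> H; have := congr1 (det2 u) H; rewrite detZr detDr => ->; zring. Qed.
Lemma lin_p_l c v p s u : vscale c v = vadd p s -> det2 p u = c * det2 v u - det2 s u.
Proof. move=> H; have := congr1 (fun w => det2 w u) H; rewrite /= detZl detDl => ->; zring. Qed.

Ltac nlia := repeat match goal with
 | H : is_true (_ && _) |- _ => case/andP: H => ? ?
 | H : is_true (leq _ _) |- _ => move/ssrnat.leP: H => H
 | H : is_true (~~ leq _ _) |- _ => move/negP/ssrnat.leP: H => H
 | |- is_true (_ && _) => apply/andP; split
 | |- is_true (leq _ _) => apply/ssrnat.leP
 end; unfold addn, addn_rec, subn, subn_rec, muln, muln_rec in *; simpl in *; lia.

Lemma int_mul1 (a c : int) : 0 <= a -> a * c = 1 -> a = 1 /\ c = 1.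
Proof.
move=> /zge0 ha /zeq; rewrite zM z1 => h.
have [h1 h2] := Z.eq_mul_1_nonneg _ _ ha h.
by split; apply: zinj; rewrite z1.
Qed.

Lemma chain m : forall u : nat -> vec2,
  (forall i, (i < m.+2)%N -> det2 (u i) (u i.+1) = 1) ->
  u m.+2 = vopp (u 0%N) ->
  (forall i, (0 < i < m.+2)%N -> 0 < det2 (u 0%N) (u i)) ->
  \sum_(1 <= i < m.+2) (3 - det2 (u i.-1) (u i.+1)) - 3 = det2 (u 1%N) (u m.+1).
Proof.
elim: m => [|m IH] u hdet hend hpos.
  rewrite big_nat1 /= hend !detE; zlia.
have three : forall i, (0 < i < m.+3)%N ->
    vscale (det2 (u i.-1) (u i.+1)) (u i) = vadd (u i.-1) (u i.+1).
  move=> i /andP[i0 iN]; apply: threeterm; last exact: hdet.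
  rewrite -{2}(prednK i0); apply hdet; exact: (leq_ltn_trans (leq_pred i) iN).
have yrec : forall i, (0 < i < m.+3)%N ->
    det2 (u i.-1) (u i.+1) * det2 (u 0%N) (u i) =
    det2 (u 0%N) (u i.-1) + det2 (u 0%N) (u i.+1).
  move=> i hi; have := congr1 (det2 (u 0%N)) (three i hi); by rewrite detZr detDr.
have ynn : forall k, (k <= m.+3)%N -> 0 <= det2 (u 0%N) (u k).
  move=> k; rewrite leq_eqVlt => /orP[/eqP->|hk].
    by rewrite hend detNr detvv oppr0.
  case: k hk => [|k] hk; first by rewrite detvv.
  by apply: ltW; apply hpos.
have [j [j0 jn Bj]] : exists j, [/\ (0 < j)%N, (j < m.+3)%N & det2 (u j.-1) (u j.+1) = 1].
  apply: NNPP => Hno.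
  have B2 : forall j, (0 < j < m.+3)%N -> 2 <= det2 (u j.-1) (u j.+1).
    move=> j hj.
    have ne : det2 (u j.-1) (u j.+1) <> 1 by move=> e; apply: Hno; exists j; case/andP: hj.
    have yr := yrec j hj. have y1 := hpos j hj.
    case/andP: hj => j0 jn.
    have ya := ynn j.-1 (leq_trans (leq_pred j) (ltnW jn)).
    have yb := ynn j.+1 jn.
    have pab : 0 < det2 (u 0%N) (u j.-1) + det2 (u 0%N) (u j.+1).
      case: (ltnP 1 j) => h1.
        have h : (0 < j.-1 < m.+3)%N.
          by rewrite ltn_predRL h1 (leq_ltn_trans (leq_pred j) jn).
        have := hpos _ h. zlia.
      have ej : j = 1%N by apply/eqP; rewrite eqn_leq h1.
      subst j. have := hpos 2%N isT. rewrite /= detvv. zlia.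
    have ne' : z (det2 (u j.-1) (u j.+1)) <> Zpos xH.
      by move=> e; apply: ne; apply/zeq; rewrite e.
    have [h|h] := lerP (det2 (u j.-1) (u j.+1)) 0; zifyd; [nia | lia].
  have D : forall k, (0 < k <= m.+3)%N -> 1 <= det2 (u 0%N) (u k) - det2 (u 0%N) (u k.-1).
    elim=> [//|k IHk] /andP[_ hk].
    case: k IHk hk => [|k] IHk hk.
      by rewrite /= hdet // detvv; zlia.
    have hk' : (0 < k.+1 < m.+3)%N by [].
    have hk2 : (0 < k.+1 <= m.+3)%N by rewrite /= ltnW.
    have := IHk hk2. have := yrec _ hk'. have := B2 _ hk'. have := ynn k.+1 (ltnW hk).
    rewrite /=. move=> *; zifyd; nia.
  have := D m.+3 (leqnn _). have := hpos m.+2 (ltnSn _). rewrite /= hend detNr detvv. zlia.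
pose u' := fun k => if (k < j)%N then u k else u k.+1.
have uL : forall k, (k < j)%N -> u' k = u k by move=> k hk; rewrite /u' hk.
have uR : forall k, (j <= k)%N -> u' k = u k.+1 by move=> k hk; rewrite /u' ltnNge hk.
clearbody u'.
have B3 := three j (introT andP (conj j0 jn)). rewrite Bj in B3.
have hdet' : forall i, (i < m.+2)%N -> det2 (u' i) (u' i.+1) = 1.
  move=> i hi.
  case: (ltnP i.+1 j) => h.
    rewrite uL ?uL //; last exact: ltn_trans (ltnSn i) h.
    by apply hdet; exact: leq_trans hi (leqnSn _).
  case: (ltnP i j) => h2.
    have ej : j = i.+1 by apply/eqP; rewrite eqn_leq h h2.
    rewrite uL // uR ?ej //. by move: Bj; rewrite ej.
  have h3 : (j <= i.+1)%N := leq_trans h2 (leqnSn _).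
  rewrite !uR //. by apply hdet.
have hend' : u' m.+2 = vopp (u' 0%N).
  by rewrite uR ?uL // -ltnS.
have hpos' : forall i, (0 < i < m.+2)%N -> 0 < det2 (u' 0%N) (u' i).
  move=> i /andP[i0 im]; rewrite uL //.
  case: (ltnP i j) => h; [rewrite uL // | rewrite uR //]; apply hpos.
    by rewrite i0 (ltn_trans im).
  exact: im.
have IH' := IH u' hdet' hend' hpos'.
have L : \sum_(1 <= i < j) (3 - det2 (u' i.-1) (u' i.+1)) =
         \sum_(1 <= i < j) (3 - det2 (u i.-1) (u i.+1)) + (if (1 < j)%N then 1 else 0).
  case: (ltnP 1 j) => h1; last by rewrite !big_geq // addr0.
  have [k ek] : exists k, j = k.+2 by exists j.-2; rewrite -subn2 -addn2 subnK.
  subst j.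
  rewrite (big_nat_recr k.+1 1) //= (big_nat_recr k.+1 1) //=.
  rewrite (eq_big_nat _ _ (F2 := fun i => 3 - det2 (u i.-1) (u i.+1))); last first.
    move=> i /andP[i1 ik]; rewrite !uL //; by rewrite ltnS (leq_trans (leq_pred i) (ltnW ik)).
  rewrite uL ?uR //.
  have := congr1 (det2 (u k)) B3. rewrite detZr mul1r detDr hdet; last by rewrite ltnW // ltnW.
  move=> e. rewrite -[RHS]addrA; congr (_ + _). zlia.
have R : \sum_(j <= i < m.+2) (3 - det2 (u' i.-1) (u' i.+1)) =
         \sum_(j.+1 <= i < m.+3) (3 - det2 (u i.-1) (u i.+1)) + (if (j < m.+2)%N then 1 else 0).
  case: (ltnP j m.+2) => h2; last by rewrite !big_geq // addr0.
  rewrite big_ltn // [in RHS]big_ltn // !big_add1 /=.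
  rewrite (eq_big_nat _ _ (F2 := fun i => 3 - det2 (u i.+1) (u i.+3))); last first.
    move=> i /andP[i1 im].
    have ji2 : (j <= i.+2)%N by rewrite (leq_trans i1) // leqW.
    by rewrite !uR.
  rewrite uL ?uR //; last by rewrite prednK.
  have := congr1 (fun v => det2 v (u j.+2)) B3. rewrite /= detZl mul1r detDl hdet //.
  move=> e. zlia.
have C : det2 (u 1%N) (u m.+2) = det2 (u' 1%N) (u' m.+1)
     + (if (1 < j)%N then 0 else 1) + (if (j < m.+2)%N then 0 else 1).
  case: (ltnP 1 j) => h1; case: (ltnP j m.+2) => h2.
  - rewrite uL // uR //; zlia.
  - have ej : j = m.+2 by apply/eqP; rewrite eqn_leq h2 -ltnS jn.
    subst j. rewrite uL // uL //.
    move: B3; rewrite /= hend => B3.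
    have := congr1 (det2 (u 1%N)) B3. rewrite detZr mul1r detDr detNr.
    rewrite (detC (u 1%N) (u 0%N)) hdet //. move=> e; zlia.
  - have ej : j = 1%N by apply/eqP; rewrite eqn_leq h1.
    subst j. rewrite !uR //.
    have := congr1 (fun v => det2 v (u m.+2)) B3. rewrite /= detZl mul1r detDl.
    have := hdet m.+2 (ltnSn _). rewrite hend detNr (detC (u m.+2) (u 0%N)).
    move=> e1 e2; zlia.
  - by have := leq_trans h2 h1.
rewrite (big_cat_nat _ (n:=j)) //; last exact: ltnW jn.
rewrite [\sum_(j <= i < m.+3) _]big_ltn //.
rewrite (big_cat_nat _ (n:=j)) // in IH'.
rewrite L R in IH'.
move: IH' C Bj; rewrite /=.
set S1 := \sum_(1 <= i < j) _.
set S2 := \sum_(j.+1 <= i < m.+3) _.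
set D0 := det2 (u j.-1) (u j.+1).
case: (1 < j)%N; case: (j < m.+2)%N; move=> IH' C Bj; zlia.
Qed.

Section ZA.
Local Open Scope Z_scope.
Lemma zaux (A x y : Z) : 1 <= A -> 0 < (1 + x*x + y*y)*A + x.
Proof. intro h. assert (0 <= (A-1)*(1+x*x+y*y)) by (apply Z.mul_nonneg_nonneg; nia). nia. Qed.
End ZA.

Notation Rr l rho i := (rho (cyc l i)).

Lemma cyc_small l i : (i < l.+1)%N -> cyc l i = i.
Proof. exact: modn_small. Qed.
Lemma cyc_top l : cyc l l.+1 = 0%N.
Proof. exact: modnn. Qed.
Lemma cyc_prev l i : (0 < i)%N -> (i < l.+1)%N -> cyc l (i + l) = i.-1.
Proof.
move=> i0 il. rewrite /cyc -{1}(prednK i0) addSnnS modnDr modn_small //.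
by rewrite (leq_ltn_trans (leq_pred i)).
Qed.

Lemma ray_int l b rho j k : is_tv l b rho -> (j < l.+1)%N -> (k < l.+1)%N ->
  0 < det2 (Rr l rho k) (Rr l rho j.+1) -> 0 < det2 (Rr l rho j) (Rr l rho k) -> False.
Proof.
case=> H1 H2 H3 H4 hj hk hA hC.
set d1 := det2 (Rr l rho k.+1) (Rr l rho j.+1).
set d2 := det2 (Rr l rho j) (Rr l rho k.+1).
set N := 1 + d1 * d1 + d2 * d2.
have := H3 (vadd (vscale N (Rr l rho k)) (Rr l rho k.+1)) k j hk hj.
rewrite !detE H1 -/d1 -/d2.
have e : k = j -> False.
  move=> e; subst k; move: hC; rewrite detvv ltxx //.
move=> h; apply: e; apply: h; rewrite /N; clearbody d1 d2.
- intros; zifyd; nia.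
- intros; zifyd; nia.
- have := zaux (z (det2 (Rr l rho k) (Rr l rho j.+1))) (z d1) (z d2).
  move: hA; intros; zifyd; nia.
- have := zaux (z (det2 (Rr l rho j) (Rr l rho k))) (z d2) (z d1).
  move: hC; intros; zifyd; nia.
Qed.


Lemma ray_inj l b rho j k : is_tv l b rho -> (j < l.+1)%N -> (k < l.+1)%N ->
  Rr l rho j = Rr l rho k -> j = k.
Proof.
move=> tv hj hk e; case: tv => H1 H2 H3 H4.
have ej := H1 j. rewrite e in ej.
set d := det2 (Rr l rho j.+1) (Rr l rho k.+1).
set M := 1 + d * d.
apply: (H3 (vadd (vadd (vscale M (Rr l rho j)) (Rr l rho j.+1)) (Rr l rho k.+1)) j k hj hk);
  rewrite e !detE ?H1 ?ej ?(detC (Rr l rho k.+1) (Rr l rho j.+1)); fold d; rewrite /M; clearbody d; intros; zifyd; nia.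
Qed.

Section ZB.
Local Open Scope Z_scope.
Lemma arith1 (Xp Yp Xs Ys b0 : Z) : b0 < 0 -> Xp <= 0 -> Xs + b0*Ys <= 0 -> 0 < -Ys -> 0 < Yp ->
  Xp*Ys - Yp*Xs = 1 -> Xp = 0 /\ Yp = 1 /\ Xs = -1 /\ Ys = -1 /\ b0 = -1.
Proof.
move=> h1 h2 h3 h4 h5 h6.
have h7 : b0 * Ys >= 1 by nia.
have h8 : Yp * Xs <= -1 by nia.
have h9 : Xp * Ys >= 0 by nia.
have h10 : Yp * (- Xs) = 1 by lia.
have [e1 e2] := Z.eq_mul_1_nonneg Yp (- Xs) (ltac:(lia)) h10.
have h11 : (-b0) * (- Ys) = 1 by lia.
have [e3 e4] := Z.eq_mul_1_nonneg (- b0) (- Ys) (ltac:(lia)) h11.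
have e5 : Xp * Ys = 0 by lia.
have e6 : Xp = 0.
  destruct (Z.mul_eq_0 Xp Ys) as [H _]; destruct (H e5); lia.
lia.
Qed.
End ZB.

Lemma arith1i (Xp Yp Xs Ys b0 : int) : b0 < 0 -> Xp <= 0 -> Xs + b0*Ys <= 0 -> 0 < -Ys -> 0 < Yp ->
  Xp*Ys - Yp*Xs = 1 -> [/\ Xp = 0, Yp = 1, Xs = -1, Ys = -1 & b0 = -1].
Proof.
move=> h1 h2 h3 h4 h5 h6. zify1.
have [e1 [e2 [e3 [e4 e5]]]] := arith1 _ _ _ _ _ h1 h2 h3 h4 h5 h6.
by split; apply: zinj; rewrite ?zE.
Qed.

Theorem lemma3p1 (l : nat) (b : nat -> int) (rho : nat -> vec2) :
  is_tv l b rho -> b 0%N < 0 -> (2 < l)%N ->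
  (exists alpha : nat, [/\ (1 < alpha)%N, (alpha < l)%N & rho alpha = vopp (rho 0%N)]) /\
  (forall alpha : nat, (1 < alpha)%N -> (alpha < l)%N -> rho alpha = vopp (rho 0%N) ->
     [/\ 0 <= gamma_of b alpha,
         0 <= b 0%N + b alpha - gamma_of b alpha
       & forall R : vec2, pair2 (rho alpha) R = 1 ->
           pair2 (rho alpha.-1) R - pair2 (rho 1%N) R = gamma_of b alpha]).
Proof.
move=> tv b0n l2.
have tv' := tv; case: tv' => H1 H2 H3 H4.
have Rs : forall i, (i < l.+1)%N -> Rr l rho i = rho i by move=> i hi; rewrite cyc_small.
have e01 : det2 (rho 0%N) (rho 1%N) = 1.
  by have := H1 0%N; rewrite !Rs //; nlia.
have lvec : vscale (b 0%N) (rho 0%N) = vadd (rho l) (rho 1%N).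
  by have := H4 0%N isT; rewrite add0n !Rs //; try nlia.
have rl_l : forall u, det2 (rho l) u = b 0%N * det2 (rho 0%N) u - det2 (rho 1%N) u.
  by move=> u; apply: lin_p_l lvec.
have rl0 : det2 (rho l) (rho 0%N) = 1 by have := H1 l; rewrite cyc_top !Rs //; try nlia.
have PL := plucker _ _ _ _ e01.
have AP : forall k, (k < l.+1)%N -> rho k = vopp (rho 0%N) -> (1 < k)%N && (k < l)%N.
  move=> k hk ek.
  case: k hk ek => [|[|k]] hk ek.
  - by have := congr1 (fun w => det2 w (rho 1%N)) ek; rewrite /= detNl e01; zlia.
  - by move: e01; rewrite ek detNr detvv; zlia.
  - rewrite /=; move: hk; rewrite ltnS leq_eqVlt => /orP[/eqP ekl|//].
    by move: rl0; rewrite -ekl ek detNl detvv; zlia.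
split.
  have [i [hi hA hC]] := H2 (vopp (rho 0%N)).
  rewrite (Rs i hi) in hC.
  have hks : (cyc l i.+1 < l.+1)%N by rewrite /cyc ltn_pmod.
  set ks := cyc l i.+1 in hks hA *.
  have dps : det2 (rho i) (rho ks) = 1 by have := H1 i; rewrite Rs.
  rewrite PL in dps. have eks0 : ks = cyc l i.+1 by []. clearbody ks.
  move: hA hC; rewrite !detNl !detNr (detC (rho i) (rho 0%N)) => hA hC.
  have [A0|A0] := eqVneq (det2 (rho 0%N) (rho ks)) 0.
    rewrite A0 mulr0 sub0r in dps.
    have [Y1 X1] : det2 (rho 0%N) (rho i) = 1 /\ - det2 (rho ks) (rho 1%N) = 1.
      apply: int_mul1; first by move: hC; zlia.
      by rewrite mulrN.
    have eks : rho ks = vopp (rho 0%N).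
      rewrite (cramer _ _ (rho ks) e01) A0.
      have -> : det2 (rho ks) (rho 1%N) = -1 by rewrite -X1 opprK.
      exact: vcr_m1.
    exists ks; have /andP[k1 k2] := AP ks hks eks; by split.
  have [C0|C0] := eqVneq (det2 (rho 0%N) (rho i)) 0.
    rewrite C0 mul0r subr0 in dps.
    have [X1 Y1] : - det2 (rho i) (rho 1%N) = 1 /\ - det2 (rho 0%N) (rho ks) = 1.
      apply: int_mul1; first by move: hA; zlia.
      by rewrite mulrNN.
    have eki : rho i = vopp (rho 0%N).
      rewrite (cramer _ _ (rho i) e01) C0.
      have -> : det2 (rho i) (rho 1%N) = -1 by rewrite -X1 opprK.
      exact: vcr_m1.
    exists i; have /andP[k1 k2] := AP i hi eki; by split.
  exfalso.
  have hA' : 0 < - det2 (rho 0%N) (rho ks) by rewrite lt0r oppr_eq0 A0 hA.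
  have hC' : 0 < det2 (rho 0%N) (rho i) by rewrite lt0r C0 -[X in 0 <= X]opprK hC.
  clear hA hC.
  have l1 : (1 < l.+1)%N by nlia.
  have hXp : det2 (rho i) (rho 1%N) <= 0.
    rewrite leNgt; apply/negP => hp.
    apply: (@ray_int l b rho 0%N i tv) => //; rewrite !Rs //.
  have hXs : det2 (rho ks) (rho 1%N) + b 0%N * det2 (rho 0%N) (rho ks) <= 0.
    rewrite leNgt; apply/negP => hp.
    apply: (@ray_int l b rho l ks tv) => //; rewrite ?cyc_top ?(cyc_small hks) ?Rs //.
      rewrite (detC (rho ks)); zlia.
    rewrite rl_l (detC (rho 1%N)); move: hp; zlia.
  have [eXp eYp eXs eYs eb0] := arith1i _ _ _ _ _ b0n hXp hXs hA' hC' dps.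
  have pi : rho i = rho 1%N by rewrite (cramer _ _ (rho i) e01) eXp eYp vcr_01.
  have ei : i = 1%N.
    by apply: (@ray_inj l b rho i 1%N tv) => //; rewrite !Rs.
  have ek2 : ks = 2%N by rewrite eks0 ei cyc_small //; nlia.
  have pks : rho ks = rho l.
    rewrite (cramer _ _ (rho ks) e01) (cramer _ _ (rho l) e01) eXs eYs.
    rewrite rl_l e01 detvv eb0 (detC (rho 0%N) (rho l)) rl0.
    by rewrite mulr1 subr0.
  have : ks = l by apply: (@ray_inj l b rho ks l tv) => //; rewrite !Rs.
  move: l2; rewrite -ek2 => l2 e; rewrite e ltnn in l2. done.
move=> al a1 al2 ea.
have hal : (al < l.+1)%N by nlia.
have Ya : det2 (rho 0%N) (rho al) = 0 by rewrite ea detNr detvv oppr0.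
have U : forall i, (0 < i < al)%N -> 0 < det2 (rho 0%N) (rho i).
  elim=> [//|i IHi] hi.
  case: i IHi hi => [|i] IHi hi; first by rewrite e01.
  have Yi : 0 < det2 (rho 0%N) (rho i.+1) by apply: IHi; nlia.
  have dpq : det2 (rho i.+1) (rho i.+2) = 1 by have := H1 i.+1; rewrite !Rs //; nlia.
  rewrite ltNge; apply/negP => hle.
  have [Y0|Y0] := eqVneq (det2 (rho 0%N) (rho i.+2)) 0.
    rewrite PL Y0 mulr0 sub0r in dpq.
    have [Y1 X1] : det2 (rho 0%N) (rho i.+1) = 1 /\ - det2 (rho i.+2) (rho 1%N) = 1.
      apply: int_mul1; first by move: Yi; zlia.
      by rewrite mulrN.
    have eq2 : rho i.+2 = rho al.
      rewrite ea (cramer _ _ (rho i.+2) e01) Y0.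
      have -> : det2 (rho i.+2) (rho 1%N) = -1 by rewrite -X1 opprK.
      exact: vcr_m1.
    have : i.+2 = al by apply: (@ray_inj l b rho i.+2 al tv); rewrite ?Rs //; nlia.
    by move=> e; move: hi; rewrite e ltnn andbF.
  apply: (@ray_int l b rho i.+1 al tv); rewrite ?Rs //; try nlia.
    rewrite ea detNl; move: hle Y0; rewrite lt0r oppr_eq0 => hle ->.
    by rewrite /= oppr_ge0.
  by rewrite ea detNr (detC (rho i.+1)) opprK.
have [m em] : exists m, al = m.+2 by exists al.-2; nlia.
subst al.
have hdet : forall i, (i < m.+2)%N -> det2 (rho i) (rho i.+1) = 1.
  by move=> i hi; have := H1 i; rewrite !Rs //; nlia.
have G := chain m rho hdet ea U.
have gam : gamma_of b m.+2 = det2 (rho 1%N) (rho m.+1).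
  rewrite -G /gamma_of; congr (_ - _); apply: eq_big_nat => i /andP[i1 im].
  congr (_ - _); symmetry.
  have := H4 i (ltac:(nlia)); rewrite cyc_prev ?Rs //; try nlia.
  move=> hv; apply: (bdet _ _ _ _ hv).
  have := H1 i.-1; rewrite prednK // !Rs //; nlia.
rewrite gam /=.
set x := det2 (rho 1%N) (rho m.+1).
have Ym1 : det2 (rho 0%N) (rho m.+1) = 1.
  by have := H1 m.+1; rewrite !Rs // ?ea ?detNr ?(detC (rho m.+1)) ?opprK //; nlia.
have Um1 : 0 < det2 (rho 0%N) (rho m.+1) by rewrite Ym1.
split.
- rewrite leNgt; apply/negP => hx.
  apply: (@ray_int l b rho 0%N m.+1 tv); rewrite ?Rs //; try nlia.
  by rewrite (detC (rho m.+1)) -/x oppr_gt0.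
- rewrite leNgt; apply/negP => hx.
  have hv : vscale (b m.+2) (rho m.+2) = vadd (rho m.+1) (rho m.+3).
    have := H4 m.+2 (ltac:(nlia)); rewrite cyc_prev ?Rs //; nlia.
  have d1 : det2 (rho m.+3) (rho 0%N) = 1.
    rewrite (lin_s_l _ _ _ _ _ hv) ea detNl detvv oppr0 mulr0 (detC (rho m.+1)) Ym1; zlia.
  have d2 : det2 (rho 0%N) (rho m.+3) = -1.
    by rewrite detC d1.
  have d3 : det2 (rho 1%N) (rho m.+3) = b m.+2 - x.
    rewrite (lin_s_r _ _ _ _ _ hv) ea detNr (detC (rho 1%N) (rho 0%N)) e01 -/x; zlia.
  apply: (@ray_int l b rho l m.+3 tv); rewrite ?cyc_top ?Rs //; try nlia.
    by rewrite d1.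
  rewrite rl_l d2 d3; move: hx; zlia.
- move=> R0 hR.
  have p0 : pair2 (rho 0%N) R0 = -1 by move: hR; rewrite ea pairN => <-; rewrite opprK.
  rewrite (cramer _ _ (rho m.+1) e01) pairE p0 Ym1 (detC (rho m.+1)) -/x; zlia.
Qed.
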